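(* Let $Q=2^q$, $n\ge1$, $\varepsilon\in[0,1]$, $d\in[0,1]$ with $dn$ an integer, $\delta_1,\delta_2\ge0$, and let $A\subseteq[Q]^n$, $B\subseteq[Q]^n$ be $(d,2\varepsilon)$-diverse with $|A|\ge Q^{n(1-\delta_1)}$ and $|B|\ge Q^{n(1-\delta_2)}$. If $W$ is drawn from $\mathcal{W}_{Q,\varepsilon}$, then with probability at least $1/2$, $$\mathcal{R}^{(0)}_{W,n}\ge 2q\left(1-\left(\frac{\delta_1+\delta_2}{2}+d\right)\right)-2.$$
   Context: Fix an integer $q\ge1$, $Q=2^q$, $[Q]=\{1,\dots,Q\}$, and a symbol $\phi\notin[Q]$. A channel is $W=(W_1,W_2)$ with $W_i:[Q]^2\to[Q]\cup\{\phi\}$; $W^{(n)}_i(x,y)=(W_i(x_1,y_1),\dots,W_i(x_n,y_n))$ for $x,y\in[Q]^n$. A zero-error code of block length $n$ with message sets $[M_1],[M_2]$ consists of encoders $E_i:[M_i]\to[Q]^n$ and decoders $D_i:([Q]\cup\{\phi\})^n\to[M_i]$ with $D_i(W^{(n)}_i(E_1(m_1),E_2(m_2)))=m_i$ for $i=1,2$ and all message pairs; $\mathcal{R}^{(0)}_{W,n}$ is the supremum of $\frac1n\log_2(M_1M_2)$ over such codes. $\mathcal{W}_{Q,\varepsilon}$ is the distribution over channels in which, independently for every $(x,y)\in[Q]^2$, $W(x,y)=(\phi,\phi)$ with probability $\varepsilon$ and $W(x,y)=(x,y)$ otherwise. A pair $(x^{(n)},y^{(n)})\in[Q]^n\times[Q]^n$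 is $(d,\varepsilon)$-diverse if for every index set $I\subseteq[n]$ with $|I|=dn$, $|\{(x_j,y_j):j\in I\}|>\varepsilon Q^2$; sets $A,B\subseteq[Q]^n$ are $(d,\varepsilon)$-diverse if every $(x^{(n)},y^{(n)})\in A\times B$ is $(d,\varepsilon)$-diverse. *)

(* Defs.v *)
From Stdlib Require Import Reals ClassicalDescription.
From mathcomp Require Import all_boot.

Set Implicit Arguments.
Unset Strict Implicit.
Unset Printing Implicit Defensive.

Open Scope R_scope.

(* Alphabet [Q] is modelled by 'I_Q (0-based), the output alphabet
   [Q] ∪ {phi} by option 'I_Q (None = phi). *)
Definition out (Q : nat) := option 'I_Q.

Definition word (Q n : nat) := {ffun 'I_n -> 'I_Q}.

Record channel (Q : nat) := Channel {
  W1 : 'I_Q -> 'I_Q -> out Q;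
  W2 : 'I_Q -> 'I_Q -> out Q }.

Definition chan_n (Q n : nat) (Wi : 'I_Q -> 'I_Q -> out Q)
    (x y : word Q n) : 'I_n -> out Q :=
  fun j => Wi (x j) (y j).

Definition zero_error_code (Q n M1 M2 : nat) (W : channel Q)
    (E1 : 'I_M1 -> word Q n) (E2 : 'I_M2 -> word Q n)
    (D1 : ('I_n -> out Q) -> 'I_M1) (D2 : ('I_n -> out Q) -> 'I_M2) : Prop :=
  forall (m1 : 'I_M1) (m2 : 'I_M2),
    D1 (chan_n (W1 W) (E1 m1) (E2 m2)) = m1 /\
    D2 (chan_n (W2 W) (E1 m1) (E2 m2)) = m2.

Definition log2 (x : R) : R := (ln x / ln 2).

Definition zero_error_rates (Q n : nat) (W : channel Q) (r : R) : Prop :=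
  exists (M1 M2 : nat) (E1 : 'I_M1 -> word Q n) (E2 : 'I_M2 -> word Q n)
         (D1 : ('I_n -> out Q) -> 'I_M1) (D2 : ('I_n -> out Q) -> 'I_M2),
    (0 < M1)%nat /\ (0 < M2)%nat /\ zero_error_code W E1 E2 D1 D2 /\
    r = (/ INR n * log2 (INR (M1 * M2)%N)).

(* "R^(0)_{W,n} >= b": the supremum of the rates exists and is >= b. *)
Definition zero_error_rate_ge (Q n : nat) (W : channel Q) (b : R) : Prop :=
  exists c : R, is_lub (zero_error_rates n W) c /\ (b <= c).

Definition erasure_channel (Q : nat) (Er : {set 'I_Q * 'I_Q}) : channel Q :=
  Channel (fun x y => if (x, y) \in Er then None else Some x)
          (fun x y => if (x, y) \in Er then None else Some y).

(* Probability of the erasure pattern Er under W_{Q,eps}: each pair erased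
   independently with probability eps. *)
Definition pattern_weight (Q : nat) (eps : R) (Er : {set 'I_Q * 'I_Q}) : R :=
  (eps ^ #|Er| * (1 - eps) ^ (Q * Q - #|Er|)%N).

Definition prob_W (Q : nat) (eps : R) (P : channel Q -> Prop) : R :=
  foldr Rplus 0
    [seq (if excluded_middle_informative (P (erasure_channel Er))
          then pattern_weight eps Er else 0)
    | Er <- enum {set 'I_Q * 'I_Q}].

Definition diverse_pair (Q n : nat) (d eps : R) (x y : word Q n) : Prop :=
  forall I : {set 'I_n},
    INR #|I| = (d * INR n) ->
    (eps * INR (Q * Q)%N < INR #|[set (x j, y j) | j in I]|).

Definition diverse_sets (Q n : nat) (d eps : R) (A B : {set word Q n}) : Prop :=
  forall x y, x \in A -> y \in B -> diverse_pair d eps x y.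

(* Main.v *)
Require Import Defs.
From Stdlib Require Import Reals Lra ClassicalDescription FunctionalExtensionality.
Ltac slra := lra.
Ltac sfield := field.
Ltac snra := nra.
From mathcomp Require Import all_boot all_order ssralg ssrnum Rstruct.
From mathcomp.algebra_tactics Require Import ring lra.
Import Order.TTheory GRing.Theory Num.Theory.
Open Scope R_scope.

Lemma sum_card (T : finType) (F : nat -> R) :
 (\sum_(S : {set T}) F #|S| = \sum_(k < #|T|.+1) F k *+ 'C(#|T|, k))%R.
Proof.
rewrite (partition_big (fun S : {set T} => (inord #|S| : 'I_#|T|.+1)) xpredT) //=.
apply: eq_bigr => k _.
transitivity (\sum_(S in [set S : {set T} | #|S| == k]) F k)%R.
  apply: eq_big => S.
    rewrite inE -(inj_eq val_inj) /= inordK //.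
    by rewrite ltnS -cardsT subset_leq_card // subsetT.
  rewrite -(inj_eq val_inj) /= inordK; first by move/eqP->.
  by rewrite ltnS -cardsT subset_leq_card // subsetT.
by rewrite sumr_const card_draws.
Qed.

Lemma binom1 (N : nat) (p : R) :
  (\sum_(k < N.+1) (p ^+ k * (1-p) ^+ (N-k)) *+ 'C(N,k) = 1)%R.
Proof.
have := exprDn (1-p) p N; rewrite subrK expr1n => E.
rewrite [RHS]E; apply: eq_bigr => k _; by rewrite mulrC.
Qed.

Lemma binomE (N : nat) (p : R) :
  (\sum_(k < N.+1) (k%:R * (p ^+ k * (1-p) ^+ (N-k))) *+ 'C(N,k) = N%:R * p)%R.
Proof.
case: N => [|M]; first by rewrite big_ord_recl big_ord0 !mul0r mul0rn addr0.
rewrite big_ord_recl /= mul0r mul0rn add0r.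
transitivity (M.+1%:R * p * \sum_(i < M.+1) (p ^+ i * (1-p) ^+ (M-i)) *+ 'C(M,i))%R;
  last by rewrite binom1 mulr1.
rewrite mulr_sumr; apply: eq_bigr => i _.
rewrite /bump /= add1n subSS mulr_natl -mulrnA.
have := mul_bin_diag M.+1 i; rewrite /= => <-.
rewrite mulrnA mulrnAr; congr (_ *+ _)%R.
by rewrite exprS -[LHS]mulr_natl !mulrA.
Qed.

Lemma prob_half (T : finType) (p : R) (good : {set T} -> Prop) :
  0 <= p <= 1 -> (0 < #|T|)%N ->
  (forall X : {set T}, INR #|X| <= 2 * p * INR #|T| -> good X) ->
  / 2 <= foldr Rplus 0 [seq (if excluded_middle_informative (good X)
       then p ^ #|X| * (1 - p) ^ (#|T| - #|X|) else 0) | X <- enum {set T}].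
Proof.
move=> [p0 p1] T0 Hg.
have p0' : (0 <= p)%R by apply/RleP.
have p1' : (p <= 1)%R by apply/RleP.
set N := #|T|.
rewrite foldrE big_map big_enum /=.
set w := fun X : {set T} => (p ^+ #|X| * (1 - p) ^+ (N - #|X|))%R.
have w0 X : (0 <= w X)%R.
  rewrite /w; apply: mulr_ge0; apply: exprn_ge0; lra.
have Hall : (\sum_(X : {set T}) w X = 1)%R.
  by rewrite (sum_card T (fun k => p ^+ k * (1 - p) ^+ (N - k)))%R binom1.
have Hexp : (\sum_(X : {set T}) #|X|%:R * w X = N%:R * p)%R.
  by rewrite (sum_card T (fun k => k%:R * (p ^+ k * (1 - p) ^+ (N - k))))%R binomE.
set c := fun X : {set T} => (#|X|%:R <= 2 * p * N%:R)%R.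
have S1 : (\sum_(X : {set T}) (if c X then w X else 0) <=
   \big[Rplus/0]_(X in {set T}) (if excluded_middle_informative (good X)
       then p ^ #|X| * (1 - p) ^ (N - #|X|) else 0))%R.
  apply: ler_sum => X _.
  case: excluded_middle_informative => HS /=.
    by rewrite !RpowE; case: (c X) => //; apply: w0.
  case E: (c X) => //.
  exfalso; apply: HS; apply: Hg; rewrite !INRE; apply/RleP; exact: E.
have S2 : (\sum_(X : {set T}) (if c X then w X else 0) +
           \sum_(X : {set T}) (if c X then 0 else w X) = 1)%R.
  rewrite -big_split /= -Hall; apply: eq_bigr => X _.
  by case: (c X); rewrite ?addr0 ?add0r.
have S3 : (\sum_(X : {set T}) (if c X then 0 else w X) <= 2^-1)%R.
  case: (eqVneq p 0%R) => [pe|pp].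
    rewrite big1 ?invr_ge0 ?ler0n // => X _.
    rewrite /c; case: ifP => // H.
    rewrite /w pe expr0n; case: eqP => [E|]; last by rewrite mul0r.
    by move: H; rewrite E pe mulr0 mul0r lexx.
  have pp' : (0 < p)%R by rewrite lt0r pp; apply/RleP.
  have N0 : (0 < N%:R :> R)%R by rewrite ltr0n.
  have : ((\sum_(X : {set T}) (if c X then 0 else w X)) * (2 * p * N%:R) <= N%:R * p)%R.
    rewrite -Hexp mulr_suml; apply: ler_sum => X _.
    rewrite /c; case: ifP => H; first by rewrite mul0r mulr_ge0 ?ler0n.
    rewrite mulrC ler_wpM2r //; apply: ltW; rewrite ltNge H //.
  set s := (\sum_(X : {set T}) _)%R => Hs.
  have Hp : (0 < p * N%:R)%R by apply: mulr_gt0.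
  nra.
have : ((2^-1 : R) <= \sum_(X : {set T}) (if c X then w X else 0))%R by lra.
move=> H; apply/RleP; apply: le_trans H _.
exact: S1.
Qed.

Definition hdist {Q n : nat} (x z : word Q n) : nat := #|[set j | x j != z j]|.

Lemma card_setT (T : finType) : #|{set T}| = (2 ^ #|T|)%N.
Proof. by rewrite -[#|{set T}|]cardsT -powersetT card_powerset cardsT. Qed.

Lemma ball_card (Q n k : nat) (j0 : 'I_n) (x : word Q n) :
  (#|[set z : word Q n | hdist x z < k]| <= 2 ^ n * Q ^ k)%N.
Proof.
pose f (z : word Q n) := ([set j : 'I_n | x j != z j],
   [ffun i : 'I_k => z (nth j0 (enum [set j | x j != z j]) i)]).
rewrite -(card_in_imset (f := f)); last first.
  move=> z1 z2; rewrite !inE /hdist => H1 H2 [ED Ef].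
  apply/ffunP => j.
  case: (boolP (j \in [set j | x j != z1 j])) => Hj.
    have Hi : (index j (enum [set j | x j != z1 j]) < k)%N.
      apply: (leq_trans _ (ltnW H1)); rewrite /hdist cardE index_mem mem_enum //.
    rewrite -ED in Ef; move/ffunP: Ef => /(_ (Ordinal Hi)); rewrite !ffunE /=.
    by rewrite nth_index ?mem_enum.
  have Hj2 : j \notin [set j | x j != z2 j] by rewrite -ED.
  move: Hj Hj2; rewrite !inE !negbK => /eqP <- /eqP <-; done.
apply: leq_trans (max_card _) _.
by rewrite card_prod card_setT card_ffun !card_ord.
Qed.

Lemma greedy (T : finType) (close : T -> T -> bool) (b : nat) :
  (forall x, close x x) -> (forall x y, close x y -> close y x) ->
  (forall x, #|[set z | close x z]| <= b)%N ->
  forall A : {set T}, exists A' : {set T}, [/\ A' \subset A,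
     {in A' &, forall x y, close x y -> x = y} & (#|A| <= #|A'| * b)%N].
Proof.
move=> refl sym hb A; move: {2}#|A| (leqnn #|A|) => m.
elim: m A => [|m IH] A HA.
  exists set0; split; rewrite ?sub0set ?cards0 //; first by move=> x y; rewrite inE.
case: (set_0Vmem A) => [->|[x xA]].
  by exists set0; split; rewrite ?sub0set ?cards0 //; move=> y z; rewrite inE.
set A1 := A :\: [set z | close x z].
have xA1 : x \notin A1 by rewrite !inE refl.
have HA1 : (#|A1| <= m)%N.
  rewrite -ltnS; apply: leq_trans HA; apply: proper_card; apply/properP; split.
    exact: subsetDl.
  by exists x.
have [A1' [sub pw cd]] := IH A1 HA1.
have xA1' : x \notin A1' by apply: contra xA1; apply: (subsetP sub).
exists (x |: A1'); split.
- apply/subsetP => y; rewrite !inE => /orP [/eqP -> //|/(subsetP sub)].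
  by rewrite inE => /andP [].
- move=> y z; rewrite !inE => /orP [/eqP ->|yA] /orP [/eqP ->|zA] //.
  + move=> cxz; have := subsetP sub z zA; rewrite !inE cxz //.
  + move=> /sym cxy; have := subsetP sub y yA; rewrite !inE cxy //.
  + exact: pw.
- rewrite cardsU1 xA1' add1n mulSn -(cardsID [set z | close x z] A).
  by apply: leq_add; [apply: leq_trans (hb x); apply: subset_leq_card; apply: subsetIr|].
Qed.

Definition compat {Q n : nat} (o : 'I_n -> out Q) (c : word Q n) : bool :=
  [forall j, (o j == None) || (o j == Some (c j))].

Definition dec {Q n : nat} {C : {set word Q n}} (H0 : (0 < #|C|)%N)
  (o : 'I_n -> out Q) : 'I_#|C| :=
  odflt (Ordinal H0) [pick m : 'I_#|C| | compat o (enum_val m)].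

Lemma decode_ok (Q n k : nat) (C : {set word Q n}) (H0 : (0 < #|C|)%N) :
  {in C &, forall x y, (hdist x y < k)%N -> x = y} ->
  forall (m : 'I_#|C|) (o : 'I_n -> out Q),
  (forall j, o j = None \/ o j = Some (enum_val m j)) ->
  (#|[set j | o j == None]| < k)%N ->
  dec H0 o = m.
Proof.
move=> pw m o Ho Hk; rewrite /dec.
case: pickP => [m' Hm'|Hn] /=; last first.
  have := Hn m; rewrite /compat => /negP []; apply/forallP => j.
  by case: (Ho j) => ->; rewrite eqxx ?orbT.
apply: enum_val_inj; apply: pw; rewrite ?enum_valP //.
apply: leq_ltn_trans Hk; apply: subset_leq_card; apply/subsetP => j.
rewrite !inE => Hj; move/forallP: Hm' => /(_ j) /orP [//|/eqP E].
case: (Ho j) => E'; first by rewrite E'.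
by move: Hj; rewrite E' in E; case: E => ->; rewrite eqxx.
Qed.

Lemma ln_le' (x y : R) : 0 < x -> x <= y -> ln x <= ln y.
Proof.
move=> x0 [H|->]; last by right.
by left; apply: ln_increasing.
Qed.

Arguments ln_le' {x y}.

Lemma ln2_pos : 0 < ln 2.
Proof. rewrite -ln_1; apply: ln_increasing; slra. Qed.

Lemma rate_in (Q n k : nat) (Er : {set 'I_Q * 'I_Q}) (A' B' : {set word Q n})
  (HA : (0 < #|A'|)%N) (HB : (0 < #|B'|)%N) :
  {in A' &, forall x y, (hdist x y < k)%N -> x = y} ->
  {in B' &, forall x y, (hdist x y < k)%N -> x = y} ->
  (forall x y, x \in A' -> y \in B' -> (#|[set j | (x j, y j) \in Er]| < k)%N) ->
  zero_error_rates n (erasure_channel Er) (/ INR n * log2 (INR (#|A'| * #|B'|))).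
Proof.
move=> pwA pwB few.
exists #|A'|, #|B'|, (fun m => enum_val m), (fun m => enum_val m), (dec HA), (dec HB).
split; [done|split; [done|split; [|done]]].
move=> m1 m2.
have Hf := few _ _ (enum_valP m1) (enum_valP m2).
split.
- apply: (decode_ok _ _ _ _ HA pwA).
    by move=> j; rewrite /chan_n /=; case: ifP => _; [left|right].
  apply: leq_ltn_trans Hf; apply: subset_leq_card; apply/subsetP => j.
  by rewrite !inE /chan_n /=; case: ifP.
- apply: (decode_ok _ _ _ _ HB pwB).
    by move=> j; rewrite /chan_n /=; case: ifP => _; [left|right].
  apply: leq_ltn_trans Hf; apply: subset_leq_card; apply/subsetP => j.
  by rewrite !inE /chan_n /=; case: ifP.
Qed.

Lemma rates_ub (Q n : nat) (W : channel Q) (r : R) : (0 < n)%N ->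
  zero_error_rates n W r ->
  r <= / INR n * log2 (INR ((Q.+1) ^ n * (Q.+1) ^ n)).
Proof.
move=> n0 [M1 [M2 [E1 [E2 [D1 [D2 [HM1 [HM2 [Hc ->]]]]]]]]].
have bM1 : (M1 <= Q.+1 ^ n)%N.
  pose f (m : 'I_M1) := [ffun j => chan_n (W1 W) (E1 m) (E2 (Ordinal HM2)) j].
  have : injective f.
    move=> a b /ffunP E.
    have Ef : chan_n (W1 W) (E1 a) (E2 (Ordinal HM2)) = chan_n (W1 W) (E1 b) (E2 (Ordinal HM2)).
      by apply: functional_extensionality => j; have := E j; rewrite !ffunE.
    by rewrite -(proj1 (Hc a (Ordinal HM2))) Ef (proj1 (Hc b (Ordinal HM2))).
  move/leq_card; rewrite card_ffun card_option !card_ord //.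
have bM2 : (M2 <= Q.+1 ^ n)%N.
  pose f (m : 'I_M2) := [ffun j => chan_n (W2 W) (E1 (Ordinal HM1)) (E2 m) j].
  have : injective f.
    move=> a b /ffunP E.
    have Ef : chan_n (W2 W) (E1 (Ordinal HM1)) (E2 a) = chan_n (W2 W) (E1 (Ordinal HM1)) (E2 b).
      by apply: functional_extensionality => j; have := E j; rewrite !ffunE.
    by rewrite -(proj2 (Hc (Ordinal HM1) a)) Ef (proj2 (Hc (Ordinal HM1) b)).
  move/leq_card; rewrite card_ffun card_option !card_ord //.
have n0' : 0 < INR n by apply: lt_0_INR; apply/ssrnat.ltP.
apply: Rmult_le_compat_l; first by left; apply: Rinv_0_lt_compat.
rewrite /log2 /Rdiv; apply: Rmult_le_compat_r.
  by left; apply: Rinv_0_lt_compat; apply: ln2_pos.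
apply: ln_le'.
  by apply: lt_0_INR; apply/ssrnat.ltP; rewrite muln_gt0 HM1 HM2.
by apply: le_INR; apply/ssrnat.leP; apply: leq_mul.
Qed.

Lemma INRM m n : INR (m * n)%N = INR m * INR n.
Proof. exact: mult_INR. Qed.

Lemma INRX m n : INR (m ^ n)%N = INR m ^ n.
Proof. by elim: n => //= n IH; rewrite expnS INRM IH. Qed.

Lemma INR_pos m : (0 < m)%N -> 0 < INR m.
Proof. by move=> H; apply: lt_0_INR; apply/ssrnat.ltP. Qed.

Lemma ln2X m : ln (INR (2 ^ m)%N) = INR m * ln 2.
Proof. by rewrite INRX ln_pow //=; slra. Qed.

Lemma side (q n k a A : nat) (dl : R) : (0 < a)%N ->
  Rpower (INR (2 ^ q)%N) (INR n * (1 - dl)) <= INR A ->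
  (A <= a * (2 ^ n * (2 ^ q) ^ k))%N ->
  (INR n * (1 - dl) * INR q - INR n - INR k * INR q) * ln 2 <= ln (INR a).
Proof.
move=> a0 HA Hb.
have HA0 : 0 < Rpower (INR (2 ^ q)%N) (INR n * (1 - dl)) by apply: exp_pos.
have := ln_le' HA0 HA.
have HA1 : 0 < INR A by slra.
have Hb' := ln_le' HA1 (le_INR _ _ (elimT ssrnat.leP Hb)).
rewrite INRM in Hb'.
have P2 : 0 < INR (2 ^ n * (2 ^ q) ^ k)%N by apply: INR_pos; rewrite muln_gt0 !expn_gt0.
rewrite ln_mult in Hb'; [|exact: INR_pos|exact: P2].
rewrite -expnM INRM ln_mult ?ln2X in Hb'; try (apply: INR_pos; rewrite expn_gt0 //).
rewrite /Rpower ln_exp ln2X => H.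
move: Hb'; rewrite INRM.
move=> H2; slra.
Qed.

Lemma final_arith (q n k a b A B : nat) (d d1 d2 : R) :
  (0 < n)%N -> (0 < a)%N -> (0 < b)%N -> d * INR n = INR k ->
  Rpower (INR (2 ^ q)%N) (INR n * (1 - d1)) <= INR A ->
  Rpower (INR (2 ^ q)%N) (INR n * (1 - d2)) <= INR B ->
  (A <= a * (2 ^ n * (2 ^ q) ^ k))%N ->
  (B <= b * (2 ^ n * (2 ^ q) ^ k))%N ->
  2 * INR q * (1 - ((d1 + d2) / 2 + d)) - 2 <= / INR n * log2 (INR (a * b)).
Proof.
move=> n0 a0 b0 Hk HA HB bA bB.
have h1 := side q n k a A d1 a0 HA bA.
have h2 := side q n k b B d2 b0 HB bB.
rewrite -Hk in h1 h2.
have np := INR_pos n n0.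
have Lp := ln2_pos.
set T := 2 * INR q * (1 - ((d1 + d2) / 2 + d)) - 2.
have key : T * INR n * ln 2 <= ln (INR a) + ln (INR b) by rewrite /T; slra.
rewrite /log2 INRM ln_mult; try exact: INR_pos.
replace T with (/ INR n * ((T * INR n * ln 2) / ln 2)); last first.
  sfield; split; apply: Rgt_not_eq => //.
apply: Rmult_le_compat_l; first by left; apply: Rinv_0_lt_compat.
apply: Rmult_le_compat_r => //.
by left; apply: Rinv_0_lt_compat.
Qed.


Theorem theorem3 (q n : nat) (eps d delta1 delta2 : R)
    (A B : {set word (2 ^ q)%N n}) :
  (1 <= q)%N -> (1 <= n)%N ->
  0 <= eps <= 1 -> 0 <= d <= 1 ->
  (exists k : nat, d * INR n = INR k) ->
  0 <= delta1 -> 0 <= delta2 ->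
  diverse_sets d (2 * eps) A B ->
  Rpower (INR (2 ^ q)%N) (INR n * (1 - delta1)) <= INR #|A| ->
  Rpower (INR (2 ^ q)%N) (INR n * (1 - delta2)) <= INR #|B| ->
  / 2 <= prob_W eps (fun W : channel (2 ^ q)%N => zero_error_rate_ge n W
           (2 * INR q * (1 - ((delta1 + delta2) / 2 + d)) - 2)).
Proof.
move=> q1 n1 [e0 e1] [d0 d1] [k Hk] dl1 dl2 div HA HB.
have A0 : (0 < #|A|)%N.
  rewrite lt0n; apply/eqP => E; rewrite E /= in HA.
  have : 0 < Rpower (INR (2 ^ q)%N) (INR n * (1 - delta1)) by apply: exp_pos.
  slra.
have B0 : (0 < #|B|)%N.
  rewrite lt0n; apply/eqP => E; rewrite E /= in HB.
  have : 0 < Rpower (INR (2 ^ q)%N) (INR n * (1 - delta2)) by apply: exp_pos.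
  slra.
have [x0 x0A] : exists x, x \in A by apply/card_gt0P.
have [y0 y0B] : exists y, y \in B by apply/card_gt0P.
have cT : #|{: 'I_(2 ^ q) * 'I_(2 ^ q)}| = (2 ^ q * 2 ^ q)%N.
  by rewrite card_prod card_ord.
have k0 : (0 < k)%N.
  rewrite lt0n; apply/eqP => E; rewrite E /= in Hk.
  have := div x0 y0 x0A y0B set0; rewrite cards0 /= => /(_ (esym Hk)).
  rewrite imset0 cards0 /=.
  have := pos_INR (2 ^ q * 2 ^ q)%N; snra.
pose j0 : 'I_n := Ordinal n1.
pose close (x z : word (2 ^ q)%N n) := (hdist x z < k)%N.
have refl x : close x x.
  rewrite /close /hdist; have -> : [set j | x j != x j] = set0.
    by apply/setP => j; rewrite !inE eqxx.
  by rewrite cards0.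
have sym x y : close x y -> close y x.
  rewrite /close /hdist; have -> // : [set j | x j != y j] = [set j | y j != x j].
  by apply/setP => j; rewrite !inE eq_sym.
have hb x : (#|[set z | close x z]| <= 2 ^ n * (2 ^ q) ^ k)%N by apply: ball_card.
have [A' [sA pwA cA]] := greedy _ _ _ refl sym hb A.
have [B' [sB pwB cB]] := greedy _ _ _ refl sym hb B.
have A'0 : (0 < #|A'|)%N.
  rewrite lt0n; apply/eqP => E; move: cA; rewrite E mul0n; move: A0; by case: #|A|.
have B'0 : (0 < #|B'|)%N.
  rewrite lt0n; apply/eqP => E; move: cB; rewrite E mul0n; move: B0; by case: #|B|.
rewrite /prob_W /pattern_weight -cT.
apply: (prob_half _ _ (fun Er => zero_error_rate_ge n (erasure_channel Er)
           (2 * INR q * (1 - ((delta1 + delta2) / 2 + d)) - 2))).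
- by split.
- by rewrite cT muln_gt0 expn_gt0.
move=> Er HEr.
have few x y : x \in A' -> y \in B' -> (#|[set j | (x j, y j) \in Er]| < k)%N.
  move=> xA yB; rewrite ltnNge; apply/negP => /card_geqP [s [us ss subs]].
  have HI : INR #|[set j in s]| = d * INR n by rewrite cardsE (card_uniqP us) ss Hk.
  move: (div x y (subsetP sA x xA) (subsetP sB y yB) _ HI) => Hd.
  match type of Hd with _ < INR #|?S| =>
    have Hs : (#|S| <= #|Er|)%N end.
    apply: subset_leq_card; apply/subsetP => p /imsetP [j]; rewrite inE => js ->.
    by have := subs j js; rewrite inE.
  move/ssrnat.leP/le_INR: Hs; rewrite cT in HEr; slra.
have Hr := rate_in _ _ _ Er _ _ A'0 B'0 pwA pwB few.
have bnd : bound (zero_error_rates n (erasure_channel Er)).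
  exists (/ INR n * log2 (INR (((2 ^ q).+1) ^ n * ((2 ^ q).+1) ^ n)%N)).
  by move=> r Hr'; apply: (rates_ub _ _ _ _ n1 Hr').
have [c Hc] := completeness _ bnd (ex_intro _ _ Hr).
exists c; split => //.
apply: Rle_trans (proj1 Hc _ Hr).
exact: (final_arith q n k #|A'| #|B'| #|A| #|B| d delta1 delta2 n1 A'0 B'0 Hk HA HB cA cB).
Qed.
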